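(* Let $I$ be a real interval with $[-1,0]\subseteq I\subseteq\mathbb{R}_-$, and let $f\colon I^n\to\mathbb{R}$ be a nonconstant quasi-Lovász extension, $f=L\circ\varphi$. Then the following are equivalent: (i) $f_0$ is weakly homogeneous; (ii) there exists $A\subseteq[n]$ with $f_0(-\mathbf{1}_A)\neq 0$; (iii) $\varphi(-1)\neq0$. Moreover, in this case $f_0(x\mathbf{1}_A)=\frac{\varphi(x)}{\varphi(-1)}f_0(-\mathbf{1}_A)$ for all $x\in I$ and all $A\subseteq[n]$.
   Context: Notation: $[n]=\{1,\ldots,n\}$; $\mathbf{1}_A$ is the indicator tuple of $A\subseteq[n]$, $\mathbf{0}=\mathbf{1}_\varnothing$; for a function $g$, $g_0=g-g(\mathbf{0})$. For $\sigma$ a permutation of $[n]$, $\mathbb{R}^n_\sigma=\{\mathbf{x}: x_{\sigma(1)}\leq\cdots\leq x_{\sigma(n)}\}$, $A^\uparrow_\sigma(i)=\{\sigma(i),\ldots,\sigma(n)\}$, $A^\uparrow_\sigma(n+1)=\varnothing$. The Lovász extension $L_\psi\colon\mathbb{R}^n\to\mathbb{R}$ of $\psi\colon\{0,1\}^n\to\mathbb{R}$ is the function whose restriction to each $\mathbb{R}^n_\sigma$ is the unique affine function agreeing with $\psi$ at the points $\mathbf{1}_{A^\uparrow_\sigma(k)}$, $k\in[n+1]$; a Lovász extension is any such $L_\psi$. A quasi-Lovász extension is a function $f\colon I^n\to\mathbb{R}$ with $f(\mathbf{x})=L(\varphi(x_1),\ldots,\varphi(x_n))$, where $L$ is a Lovász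 extension and $\varphi\colon I\to\mathbb{R}$ is nondecreasing with $\varphi(0)=0$. A function $g\colon I^n\to\mathbb{R}$ with $I\subseteq\mathbb{R}_-$ is weakly homogeneous if there exists a nondecreasing $\phi\colon I\to\mathbb{R}$ with $\phi(0)=0$ such that $g(x\mathbf{1}_A)=-\phi(x)g(-\mathbf{1}_A)$ for all $x\in I$, $A\subseteq[n]$. *)

(* Defs.v *)
(* R is an arbitrary real field (the statement is order-algebraic). *)
From HB Require Import structures.
From mathcomp Require Import all_boot all_order all_algebra all_fingroup.
Set Implicit Arguments. Unset Strict Implicit. Unset Printing Implicit Defensive.
Import Order.TTheory GRing.Theory Num.Theory.
Local Open Scope ring_scope.

Definition ind (R : realFieldType) (n : nat) (A : {set 'I_n}) : 'I_n -> R :=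
  fun i => (i \in A)%:R.

Definition in_cone (R : realFieldType) (n : nat) (s : 'S_n) (x : 'I_n -> R) : Prop :=
  forall i j : 'I_n, (i <= j)%N -> x (s i) <= x (s j).

(* A^up_σ(k) = {σ(k),...,σ(n)}, k = 0..n (0-indexed; k = n gives the empty set) *)
Definition Aup (n : nat) (s : 'S_n) (k : 'I_n.+1) : {set 'I_n} :=
  [set i : 'I_n | (k <= (s^-1)%g i)%N].

(* L is the Lovász extension of psi : {0,1}^n -> R (subsets of [n] encode {0,1}^n):
   on each cone R^n_σ, L coincides with an affine function agreeing with psi
   at the points 1_{A^up_σ(k)}, k in [n+1]. *)
Definition lovasz_ext_of (R : realFieldType) (n : nat) (psi : {set 'I_n} -> R)
  (L : ('I_n -> R) -> R) : Prop :=
  forall s : 'S_n, exists (a : R) (c : 'I_n -> R),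
    (forall k : 'I_n.+1,
        a + \sum_(i < n) c i * ind R (Aup s k) i = psi (Aup s k)) /\
    (forall x, in_cone s x -> L x = a + \sum_(i < n) c i * x i).

Definition is_lovasz_ext (R : realFieldType) (n : nat) (L : ('I_n -> R) -> R) : Prop :=
  exists psi : {set 'I_n} -> R, lovasz_ext_of psi L.

Definition is_interval (R : realFieldType) (I : R -> Prop) : Prop :=
  forall x y z, I x -> I z -> x <= y -> y <= z -> I y.

Definition in_cube (R : realFieldType) (n : nat) (I : R -> Prop) (x : 'I_n -> R) : Prop :=
  forall i, I (x i).

Definition nondecr_on (R : realFieldType) (I : R -> Prop) (phi : R -> R) : Prop :=
  forall x y, I x -> I y -> x <= y -> phi x <= phi y.

Definition quasi_lovasz (R : realFieldType) (n : nat) (I : R -> Prop)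
  (f : ('I_n -> R) -> R) (L : ('I_n -> R) -> R) (phi : R -> R) : Prop :=
  [/\ is_lovasz_ext L, nondecr_on I phi, phi 0 = 0 &
      forall x, in_cube I x -> f x = L (fun i => phi (x i))].

Definition f0 (R : realFieldType) (n : nat) (g : ('I_n -> R) -> R) : ('I_n -> R) -> R :=
  fun x => g x - g (fun _ => 0).

Definition weakly_homogeneous (R : realFieldType) (n : nat) (I : R -> Prop)
  (g : ('I_n -> R) -> R) : Prop :=
  exists phi : R -> R, nondecr_on I phi /\ phi 0 = 0 /\
    forall (x : R) (A : {set 'I_n}), I x ->
      g (fun i => x * ind R A i) = - phi x * g (fun i => - ind R A i).

Definition nonconstant_on (R : realFieldType) (n : nat) (I : R -> Prop)
  (f : ('I_n -> R) -> R) : Prop :=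
  exists x y, in_cube I x /\ in_cube I y /\ f x <> f y.

(* Main.v *)
Require Import Defs.
From HB Require Import structures.
From mathcomp Require Import all_boot all_order all_algebra all_fingroup.
Import Order.TTheory GRing.Theory Num.Theory.
Local Open Scope ring_scope.
From Stdlib Require Import Classical FunctionalExtensionality.

Lemma sort_perm (R : realFieldType) (n : nat) (x : 'I_n -> R) :
  exists s : 'S_n, in_cone s x.
Proof.
set r := sort (fun i j => x i <= x j) (enum 'I_n).
have hp : perm_eq r (ord_tuple n) by rewrite val_ord_tuple perm_sort.
have [p Hp] := tuple_permP hp.
have hs : sorted (fun i j => x i <= x j) r.
  by apply: sort_sorted => i j; apply: le_total.
exists p => i j hij.
have Hsz : size r = n by rewrite Hp size_tuple.
have E : forall k : 'I_n, nth k r k = p k.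
  move=> k; rewrite Hp -tnth_nth tnth_mktuple tnth_ord_tuple //.
have := @sorted_leq_nth _ (fun i j => x i <= x j) (fun a b c => @le_trans _ _ (x a) (x b) (x c)) (fun a => lexx (x a)) i r hs i j.
rewrite !inE Hsz !ltn_ord => /(_ isT isT hij).
rewrite E.
have -> : nth i r j = p j.
  by rewrite (set_nth_default j) ?E // Hsz ltn_ord.
by [].
Qed.
Arguments sort_perm {R n}.
Lemma cone_down (R : realFieldType) (n : nat) (s : 'S_n) (P : 'I_n -> bool) :
  (forall a b : 'I_n, (a <= b)%N -> P b -> P a) ->
  in_cone s (fun k => - ind R [set k | P ((s^-1)%g k)] k).
Proof.
move=> HP i j hij; rewrite /ind !inE !permK lerN2.
case Pj: (P j); first by rewrite (HP _ _ hij Pj).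
by rewrite ler0n.
Qed.
Arguments cone_down {R n s P}.

Lemma alg1 (R : realFieldType) (a S1 S2 t : R) :
  S1 = - t * S2 -> a + S1 - (a + 0) = - t * (a + S2 - (a + 0)).
Proof. by move=> ->; rewrite addr0 !(addrC a) addrK addrK. Qed.

Lemma homog (R : realFieldType) (n : nat) (L : ('I_n -> R) -> R) :
  is_lovasz_ext L -> forall (A : {set 'I_n}) (t : R), t <= 0 ->
  L (fun i => t * ind R A i) - L (fun _ => 0) =
  - t * (L (fun i => - ind R A i) - L (fun _ => 0)).
Proof.
move=> [psi hL] A t ht.
have [s hs] := sort_perm (fun i => - ind R A i).
have [a [c [_ Hc]]] := hL s.
have h0 : in_cone s (fun _ : 'I_n => (0:R)) by move=> i j _; apply: lexx.
have ht' : in_cone s (fun i => t * ind R A i).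
  move=> i j hij; have h := hs i j hij.
  rewrite -(mulrNN t (ind R A (s i))) -(mulrNN t (ind R A (s j))).
  by apply: ler_wpM2l h; rewrite oppr_ge0.
rewrite (Hc _ ht') (Hc _ h0) (Hc _ hs).
have z0 : \sum_(i < n) c i * (0:R) = 0 by apply: big1 => i _; rewrite mulr0.
rewrite z0; apply: alg1.
rewrite mulr_sumr; apply: eq_bigr => i _.
by rewrite mulrN mulNr mulrN opprK mulrCA.
Qed.

Lemma Lconst (R : realFieldType) (n : nat) (L : ('I_n -> R) -> R) :
  is_lovasz_ext L ->
  (forall A : {set 'I_n}, L (fun i => - ind R A i) = L (fun _ => 0)) ->
  forall z, L z = L (fun _ => 0).
Proof.
move=> [psi hL] HA z.
have [s hs] := sort_perm z.
have [a [c [_ Hc]]] := hL s.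
have h0 : in_cone s (fun _ : 'I_n => (0:R)) by move=> i j _; apply: lexx.
have La : L (fun _ => 0) = a.
  by rewrite (Hc _ h0) big1 ?addr0 // => i _; rewrite mulr0.
have S0 : forall P : 'I_n -> bool, (forall a b : 'I_n, (a <= b)%N -> P b -> P a) ->
    \sum_(k < n) c k * ind R [set k | P ((s^-1)%g k)] k = 0.
  move=> P HP; have := HA [set k | P ((s^-1)%g k)].
  rewrite (Hc _ (cone_down HP)) La.
  under eq_bigr do rewrite mulrN.
  by rewrite sumrN => /eqP; rewrite -subr_eq0 addrAC subrr add0r oppr_eq0 => /eqP.
have Cj : forall j, c j = 0.
  move=> j.
  have E1 := S0 (fun k => (k <= (s^-1)%g j)%N) (fun a b h1 h2 => leq_trans h1 h2).
  have E2 := S0 (fun k => (k < (s^-1)%g j)%N) (fun a b h1 h2 => leq_ltn_trans h1 h2).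
  have : \sum_(k < n) c k * ind R [set k | ((s^-1)%g k <= (s^-1)%g j)%N] k =
         \sum_(k < n) c k * ind R [set k | ((s^-1)%g k < (s^-1)%g j)%N] k + c j.
    rewrite (bigD1 j) //= (bigD1 j (P := predT)) //= /ind !inE leqnn ltnn mulr1 mulr0 add0r addrC.
    congr (_ + _); apply: eq_bigr => k hk.
    rewrite !inE leq_eqVlt val_eqE (inj_eq (@perm_inj _ _)).
    by rewrite (negbTE hk).
  by rewrite E1 E2 add0r.
rewrite (Hc _ hs) -La big1 ?addr0 ?La // => i _.
by rewrite Cj mul0r.
Qed.

Theorem proposition5 (R : realFieldType) (n : nat) (I : R -> Prop)
  (f : ('I_n -> R) -> R) (L : ('I_n -> R) -> R) (phi : R -> R) :
  is_interval I ->
  (forall x : R, -1 <= x -> x <= 0 -> I x) ->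
  (forall x : R, I x -> x <= 0) ->
  quasi_lovasz I f L phi ->
  nonconstant_on I f ->
  (weakly_homogeneous I (f0 f) <->
     exists A : {set 'I_n}, f0 f (fun i => - ind R A i) <> 0) /\
  ((exists A : {set 'I_n}, f0 f (fun i => - ind R A i) <> 0) <-> phi (-1) <> 0) /\
  (phi (-1) <> 0 ->
     forall (x : R) (A : {set 'I_n}), I x ->
       f0 f (fun i => x * ind R A i) = phi x / phi (-1) * f0 f (fun i => - ind R A i)).
Proof.
move=> _ Hsub Hneg [hL hmon hphi0 hf] [y1 [y2 [hy1 [hy2 hy12]]]].
have I0 : I 0 by apply: Hsub; rewrite ?oppr_le0 ?ler01 ?lexx.
have Im1 : I (-1) by apply: Hsub; rewrite ?lexx ?oppr_le0 ?ler01.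
set D := fun A : {set 'I_n} => L (fun i => - ind R A i) - L (fun _ => 0).
have F0 : f (fun _ => 0) = L (fun _ => 0).
  by rewrite hf // hphi0.
have F1 : forall x A, I x -> f0 f (fun i => x * ind R A i) = - phi x * D A.
  move=> x A Ix.
  have hc : in_cube I (fun i => x * ind R A i).
    by move=> i; rewrite /ind; case: (i \in A); rewrite ?mulr1 ?mulr0.
  rewrite /f0 hf // F0.
  have -> : (fun i => phi (x * ind R A i)) = (fun i => phi x * ind R A i).
    by apply: functional_extensionality => i; rewrite /ind; case: (i \in A); rewrite ?mulr1 ?mulr0.
  apply: homog => //.
  by rewrite -hphi0; apply: hmon => //; apply: Hneg.
have F2 : forall A, f0 f (fun i => - ind R A i) = - phi (-1) * D A.
  move=> A; rewrite -F1 //.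
  by congr (f0 f _); apply: functional_extensionality => i; rewrite mulN1r.
have pm1 : phi (-1) <= 0.
  by rewrite -hphi0; apply: hmon; rewrite ?oppr_le0 ?ler01.
have N1 : exists x, I x /\ phi x <> 0.
  apply: NNPP => H; apply: hy12.
  have E : forall y, in_cube I y -> f y = L (fun _ => 0).
    move=> y hy; rewrite hf //; congr L; apply: functional_extensionality => i.
    by apply: NNPP => hne; apply: H; exists (y i).
  by rewrite !E.
have N2 : exists A, D A <> 0.
  apply: NNPP => H; apply: hy12.
  have HA : forall A : {set 'I_n}, L (fun i => - ind R A i) = L (fun _ => 0).
    move=> A; apply/eqP; rewrite -subr_eq0; apply/eqP.
    by apply: NNPP => hne; apply: H; exists A.
  by rewrite !hf // !(@Lconst _ _ _ hL HA).
have ii_iii : (exists A : {set 'I_n}, f0 f (fun i => - ind R A i) <> 0) -> phi (-1) <> 0.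
  move=> [A hA] h0; apply: hA; by rewrite F2 h0 oppr0 mul0r.
have iii_ii : phi (-1) <> 0 -> exists A : {set 'I_n}, f0 f (fun i => - ind R A i) <> 0.
  move=> hp; have [A hA] := N2; exists A; rewrite F2.
  apply/eqP; rewrite mulf_neq0 ?oppr_eq0; by apply/eqP.
have formula : phi (-1) <> 0 -> forall (x : R) (A : {set 'I_n}), I x ->
       f0 f (fun i => x * ind R A i) = phi x / phi (-1) * f0 f (fun i => - ind R A i).
  move=> hp x A Ix; rewrite F1 // F2.
  rewrite !mulNr mulrN mulrA divfK //; by apply/eqP.
split; last by split.
split.
- move=> [psi [_ [_ Hpsi]]].
  apply: NNPP => H.
  have [x [Ix hx]] := N1; have [A hA] := N2.
  have := Hpsi x A Ix.
  have -> : f0 f (fun i => - ind R A i) = 0.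
    by apply: NNPP => hne; apply: H; exists A.
  rewrite mulr0 F1 // => /eqP; rewrite mulf_eq0 oppr_eq0 => /orP [] /eqP //.
- move=> hii; have hp := ii_iii hii.
  have hlt : phi (-1) < 0 by rewrite lt_neqAle pm1 andbT; apply/eqP.
  exists (fun x => phi x * (- (phi (-1))^-1)); split; [|split].
  + move=> a b Ia Ib hab; apply: ler_wpM2r.
      by rewrite oppr_ge0 invr_le0 pm1.
    by apply: hmon.
  + by rewrite hphi0 mul0r.
  + move=> x A Ix; rewrite formula //.
    by rewrite mulrN opprK.
Qed.
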